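(* Let $\mathcal{G}$ be a simple temporal graph with $n>2$ vertices. Then, in the strict setting, $\mathcal{G}$ does not admit a temporal spanning tree.
   Context: A temporal graph is $\mathcal{G}=(V,E,\lambda)$ with $V$ a finite vertex set, $E$ a set of undirected edges, and $\lambda:E\to 2^{\mathbb{N}}$ assigning time labels to edges; $(V,E)$ is the footprint. It is simple if every edge has exactly one time label. In the strict setting, a temporal path is a sequence of pairs $(e_i,t_i)$ with $t_i\in\lambda(e_i)$, $\langle e_i\rangle$ a path in the footprint and $\langle t_i\rangle$ strictly increasing. A temporal subgraph keeps a subgraph of the footprint with labels restricted from $\lambda$. A temporal spanning tree of $\mathcal{G}$ is a temporal subgraph spanning all vertices whose footprint is a tree and in which there is a temporal path from every vertex to every other vertex. *)

(* Defs.v *)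
From mathcomp Require Import all_boot.
Set Implicit Arguments. Unset Strict Implicit. Unset Printing Implicit Defensive.

Section TemporalGraphs.
Variable V : finType.

(* A temporal graph on vertex set V: an edge set E of 2-element subsets of V
   (the footprint (V,E)) and a labelling lam : {set V} -> pred nat
   (lam e is the set of time labels of e; only consulted on edges). *)
Definition undirected_edges (E : {set {set V}}) : Prop :=
  forall e, e \in E -> #|e| = 2.

Definition simple_temporal (E : {set {set V}}) (lam : {set V} -> pred nat) : Prop :=
  forall e, e \in E -> exists t, forall t', lam e t' = (t' == t).

Definition adj (F : {set {set V}}) : rel V := fun a b => [set a; b] \in F.

Definition fpath (F : {set {set V}}) (u v : V) : Prop :=
  exists xs : seq V, [/\ uniq (u :: xs), path (adj F) u xs & last u xs = v].

Definition has_cycle (F : {set {set V}}) : Prop :=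
  exists (x : V) (xs : seq V),
    [/\ 2 <= size xs, uniq (x :: xs), path (adj F) x xs & adj F (last x xs) x].

Definition is_tree (F : {set {set V}}) : Prop :=
  (forall u v, fpath F u v) /\ ~ has_cycle F.

Definition temporal_path (F : {set {set V}}) (lam : {set V} -> pred nat)
    (u v : V) : Prop :=
  exists (xs : seq V) (ts : seq nat),
    [/\ size ts = size xs, uniq (u :: xs), last u xs = v,
        (forall i, i < size xs ->
           [set nth u (u :: xs) i; nth u xs i] \in F /\
           lam [set nth u (u :: xs) i; nth u xs i] (nth 0 ts i))
      & sorted ltn ts].

Definition temporal_spanning_tree (E : {set {set V}}) (lam : {set V} -> pred nat)
    (F : {set {set V}}) : Prop :=
  [/\ F \subset E, is_tree F & forall u v, u != v -> temporal_path F lam u v].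

End TemporalGraphs.

(* Main.v *)
Require Import Defs.
From mathcomp Require Import all_boot.

Lemma adjC {V : finType} (F : {set {set V}}) x y : adj F x y = adj F y x.
Proof. by rewrite /adj setUC. Qed.

Lemma key {V : finType} (F : {set {set V}}) (lam : {set V} -> pred nat) a b c :
  a != b -> b != c -> a != c -> adj F a b -> adj F b c -> ~ has_cycle F ->
  temporal_path F lam a c ->
  exists t0 t1, [/\ t0 < t1, lam [set a; b] t0 & lam [set b; c] t1].
Proof.
move=> nab nbc nac Hab Hbc Hnc [xs [ts [Hs Hu Hl Hi Hsort]]].
have Hp : path (adj F) a xs by apply/(pathP a) => i /Hi [].
case: (boolP (b \in xs)) => Hb; last first.
  exfalso; apply: Hnc; exists b, (a :: xs); split.
  - case: xs Hl {Hp Hu Hi Hs Hb} => [/= Hl|? ? _] //; by move: nac; rewrite Hl eqxx.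
  - rewrite cons_uniq Hu andbT inE negb_or Hb andbT eq_sym //.
  - by rewrite /= adjC Hab Hp.
  - by rewrite /= Hl adjC.
case/splitPr: Hb Hu Hl Hp Hi Hs => p1 p2 Hu Hl Hp Hi Hs.
case: p1 Hu Hl Hp Hi Hs => [|y p1] Hu Hl Hp Hi Hs; last first.
  exfalso; apply: Hnc; exists a, (y :: rcons p1 b).
  have E : a :: (y :: p1) ++ b :: p2 = (a :: y :: rcons p1 b) ++ p2
    by rewrite /= cat_rcons.
  have E2 : (y :: p1) ++ b :: p2 = (y :: rcons p1 b) ++ p2
    by rewrite /= cat_rcons.
  move: Hu Hp; rewrite E E2 cat_uniq cat_path => /and3P[U1 _ _] /andP[P1 _].
  split => //.
  - by rewrite /= size_rcons.
  - by rewrite /= last_rcons adjC.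
case: p2 Hu Hl Hp Hi Hs => [|z [|w p3]] Hu Hl Hp Hi Hs.
- by move: nbc; rewrite /= in Hl; rewrite Hl eqxx.
- rewrite /= in Hl; subst z.
  case: ts Hs Hsort Hi => [|t0 [|t1 [|]]] // _ /= /andP[lt _] Hi.
  exists t0, t1; split => //.
  + by case: (Hi 0 isT).
  + by case: (Hi 1 isT).
- exfalso; apply: Hnc; exists b, [:: z, w & p3]; split => //.
  + by move: Hu => /= /andP[_].
  + by move: Hp => /= /andP[_].
  + by rewrite /= in Hl *; rewrite Hl adjC.
Qed.

Lemma three {V : finType} (F : {set {set V}}) :
  (forall u v, Defs.fpath F u v) -> 2 < #|V| ->
  exists a b c, [/\ a != b, b != c, a != c, adj F a b & adj F b c].
Proof.
move=> Hc Hn.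
have [u [v [w [nuv nvw nuw]]]] : exists u v w : V, [/\ u != v, v != w & u != w].
  move: Hn; rewrite cardE; have := enum_uniq V.
  case: (enum V) => [|u [|v [|w s]]] //= /and4P[] + + _ _ _.
  rewrite !inE !negb_or => /and3P[? ? _] /andP[? _].
  by exists u, v, w.
have [xs [U P L]] := Hc u v.
case: xs U P L => [|x1 [|x2 xs]] U P L.
- by move: nuv; rewrite /= in L; rewrite L eqxx.
- rewrite /= in L; subst x1.
  have [ys [U' P' L']] := Hc u w.
  case: ys U' P' L' => [|y1 [|y2 ys]] U' P' L'.
  + by move: nuw; rewrite /= in L'; rewrite L' eqxx.
  + rewrite /= in L'; subst y1.
    exists v, u, w; split => //; first by rewrite eq_sym.
    * by move: P => /= /andP[]; rewrite adjC.
    * by move: P' => /= /andP[].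
  + move: U' P' => /= /andP[+ /andP[+ _]] /and3P[? ? _].
    rewrite !inE !negb_or => /and3P[? ? _] /andP[? _].
    by exists u, y1, y2.
- move: U P => /= /andP[+ /andP[+ _]] /and3P[? ? _].
  rewrite !inE !negb_or => /and3P[? ? _] /andP[? _].
  by exists u, x1, x2.
Qed.

Theorem lemma1 (V : finType) (E : {set {set V}}) (lam : {set V} -> pred nat) :
  undirected_edges E -> simple_temporal E lam -> 2 < #|V| ->
  ~ exists F : {set {set V}}, temporal_spanning_tree E lam F.
Proof.
move=> HE Hsimp Hn [F [HFE [Hconn Hnc] Htp]].
have [a [b [c [nab nbc nac Hab Hbc]]]] := three F Hconn Hn.
have [t0 [t1 [lt1 L0 L1]]] := key F lam a b c nab nbc nac Hab Hbc Hnc (Htp a c nac).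
have ncb : c != b by rewrite eq_sym.
have nba : b != a by rewrite eq_sym.
have nca : c != a by rewrite eq_sym.
have Hcb : adj F c b by rewrite adjC.
have Hba : adj F b a by rewrite adjC.
have [s0 [s1 [lt2 M0 M1]]] := key F lam c b a ncb nba nca Hcb Hba Hnc (Htp c a nca).
have [tab Hab'] := Hsimp _ (subsetP HFE _ Hab).
have [tbc Hbc'] := Hsimp _ (subsetP HFE _ Hbc).
rewrite setUC in M0; rewrite setUC in M1.
move: L0 L1 M0 M1; rewrite !Hab' !Hbc' => /eqP E1 /eqP E2 /eqP E3 /eqP E4.
move: lt1 lt2; rewrite E1 E2 E3 E4 => H1 H2.
by move: (ltn_trans H1 H2); rewrite ltnn.
Qed.
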